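(* Let $d\ge 0$, $e=2^d$, and let $\nu$ be a suitable tuple. For every even $n$ with $0\le n\le 2^e-2$, the vectors $M_d^\nu w_n$ and $M_d^\nu w_{n+1}$ are complementary, i.e. $M_d^\nu w_{n+1}=M_d^\nu w_n+\mathbf 1$, where $\mathbf 1$ is the all-ones vector.
   Context: Over $\mathbb{F}_2$, $M_0=(1)$ and $M_{d+1}=\begin{pmatrix} M_d & M_d\\ 0 & M_d\end{pmatrix}$, so $M_d$ is $e\times e$ with $e=2^d$. $w_0,\dots,w_{2^e-1}$ are all vectors of $\mathbb{F}_2^e$ in increasing lexicographic order. $\sigma(a_1\cdots a_n)=a_na_1\cdots a_{n-1}$. A tuple $\nu=(n_1,\dots,n_e)$ of non-negative integers is suitable if $n_e=0$ and $n_{i+1}\le n_i\le n_{i+1}+1$ for $1\le i\le e-1$. If $C_1,\dots,C_e$ are the columns of $M_d$, then $M_d^\nu=(\sigma^{n_1}(C_1),\dots,\sigma^{n_e}(C_e))$. *)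

(* Defs.v *)
From HB Require Import structures.
From mathcomp Require Import all_boot all_order all_algebra.
Set Implicit Arguments. Unset Strict Implicit. Unset Printing Implicit Defensive.
Import GRing.Theory.
Local Open Scope ring_scope.

(* Entries of M_d (0-based indices), following the recursion
   M_0 = (1), M_{d+1} = [[M_d, M_d], [0, M_d]]. *)
Fixpoint Mentry (d i j : nat) : bool :=
  match d with
  | 0 => true
  | d'.+1 =>
    let h := (2 ^ d')%N in
    if (i < h)%N then
      (if (j < h)%N then Mentry d' i j else Mentry d' i (j - h))
    else if (j < h)%N then false else Mentry d' (i - h) (j - h)
  end.

Definition Mmx (d : nat) : 'M['F_2]_(2 ^ d) :=
  \matrix_(i < 2 ^ d, j < 2 ^ d) (Mentry d i j)%:R.

(* sigma(a_1 ... a_n) = a_n a_1 ... a_{n-1}: cyclic shift down by one *)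
Definition sigma (n : nat) (v : 'cV['F_2]_n) : 'cV['F_2]_n :=
  \col_(i < n) v (ord_pred i) 0.

(* w_k : k-th vector of F_2^e in increasing lexicographic order,
   i.e. binary expansion of k with the first coordinate most significant *)
Definition wvec (e k : nat) : 'cV['F_2]_e :=
  \col_(i < e) (odd (k %/ 2 ^ (e.-1 - i)))%:R.

(* nu = (n_1,...,n_e) stored 0-based: nth 0 nu i = n_{i+1} *)
Definition suitable (e : nat) (nu : e.-tuple nat) : Prop :=
  nth 0%N nu e.-1 = 0%N /\
  (forall i : nat, (i.+1 < e)%N ->
     (nth 0%N nu i.+1 <= nth 0%N nu i <= (nth 0%N nu i.+1).+1)%N).

Definition Mnu (d : nat) (nu : (2 ^ d).-tuple nat) : 'M['F_2]_(2 ^ d) :=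
  \matrix_(i < 2 ^ d, j < 2 ^ d)
    (iter (nth 0%N nu j) (@sigma (2 ^ d)) (col j (Mmx d))) i 0.

(* Main.v *)
Require Import Defs.
From HB Require Import structures.
From mathcomp Require Import all_boot all_order all_algebra.
From mathcomp Require Import zify.
Local Open Scope ring_scope.
Import GRing.Theory.

Lemma Mentry_last d i : (i < 2 ^ d)%N -> Mentry d i (2 ^ d - 1) = true.
Proof.
elim: d i => [|d IH] i Hi //=.
have h0 : (0 < 2 ^ d)%N by rewrite expn_gt0.
have E : (2 ^ d.+1 - 1 < 2 ^ d)%N = false by rewrite expnS; lia.
have E2 : (2 ^ d.+1 - 1 - 2 ^ d = 2 ^ d - 1)%N by rewrite expnS; lia.
rewrite E E2; case: ifP => Hih; first exact: IH.
apply: IH; move: Hi; rewrite expnS; lia.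
Qed.

Lemma half_even n : ~~ odd n -> (n.+1./2 = n./2)%N.
Proof.
move=> He; rewrite -[n]odd_double_half (negbTE He) add0n.
by rewrite -uphalfE uphalf_double doubleK.
Qed.

Lemma div_even n m : ~~ odd n -> (0 < m)%N -> (n.+1 %/ 2 ^ m = n %/ 2 ^ m)%N.
Proof.
move=> He; case: m => [|m] // _.
by rewrite expnS !divnMA !divn2 half_even.
Qed.

Theorem lemma4 (d : nat) (nu : (2 ^ d).-tuple nat) :
  suitable nu ->
  forall n : nat, ~~ odd n -> (n <= 2 ^ (2 ^ d) - 2)%N ->
    Mnu nu *m wvec (2 ^ d) n.+1 = Mnu nu *m wvec (2 ^ d) n + const_mx 1.
Proof.
move=> [Hl _] n He _.
have h0 : (0 < 2 ^ d)%N by rewrite expn_gt0.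
pose l : 'I_(2 ^ d) := @Ordinal (2 ^ d) (2 ^ d).-1 (eq_ind_r is_true h0 (ltn_predL _)).
have Hw : wvec (2 ^ d) n.+1 = wvec (2 ^ d) n + delta_mx l 0.
  apply/matrixP => i j; rewrite !mxE (ord1 j) eqxx andbT.
  case: (eqVneq i l) => [->|Hil] /=.
    by rewrite subnn expn0 !divn1 /= (negbTE He) add0r.
  rewrite addr0 div_even //.
  have := ltn_ord i; move: Hil; rewrite -val_eqE /=; lia.
rewrite Hw mulmxDr -colE; congr (_ + _).
apply/matrixP => i j; rewrite !mxE /= Hl /= !mxE.
by rewrite /= -subn1 Mentry_last.
Qed.
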